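(* Let $(\mathcal{X},d_\mathcal{X})$ and $(\mathcal{Y},d_\mathcal{Y})$ be complete separable metric spaces and let $(\mathcal{H},\|\cdot\|_\mathcal{H})$ be a separable real Hilbert space with metric $d_\mathcal{H}(u,v):=\|u-v\|_\mathcal{H}$; equip these spaces with their Borel $\sigma$-algebras $\mathcal{B}_\mathcal{X}$, $\mathcal{B}_\mathcal{Y}$, $\mathcal{B}_\mathcal{H}$. Let $P$ be a probability measure on $(\mathcal{X}\times\mathcal{Y},\mathcal{B}_{\mathcal{X}\times\mathcal{Y}})$. Let $\psi:[0,\infty)\to[0,1]$ be a continuous, subadditive and monotone increasing function with $\psi(0)=0$ and $\psi(x)>0$ for all $x>0$, and for measurable $f_1,f_2:\mathcal{X}\to\mathcal{H}$ define $$d_\psi(f_1,f_2):=\int_{\mathcal{X}\times\mathcal{Y}} \psi\bigl(d_\mathcal{H}(f_1(x),f_2(x))\bigr)\,dP(x,y).$$ Let $C(\mathcal{X},\mathcal{H})$ be the set of all continuous functions $(\mathcal{X},d_\mathcal{X})\to(\mathcal{H},d_\mathcal{H})$, and let $\mathcal{L}_0(\mathcal{X},\mathcal{H})$ be the set of all $(\mathcal{B}_\mathcal{X},\mathcal{B}_\mathcal{H})$-measurable functions $\mathcal{X}\to\mathcal{H}$. Let $\mathcal{F}\subset\mathcal{L}_0(\mathcal{X},\mathcal{H})$ be such that either $\mathcal{F}$ is a dense subset of $C(\mathcal{X},\mathcal{H})$, or $\mathcal{F}$ contains a dense subset of $C(\mathcal{X},\mathcal{H})$, where denseness is with respect to $d_\psi$.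 Then $\mathcal{F}$ is dense in $\mathcal{L}_0(\mathcal{X},\mathcal{H})$ with respect to $d_\psi$: for every $\varepsilon>0$ and every $f\in\mathcal{L}_0(\mathcal{X},\mathcal{H})$ there exists $g_{\varepsilon,f}\in\mathcal{F}$ with $d_\psi(f,g_{\varepsilon,f})<\varepsilon$.
   Context: A subset $S$ is ''dense in $T$ with respect to $d_\psi$'' means: for every $t\in T$ and every $\varepsilon>0$ there is $s\in S$ with $d_\psi(t,s)<\varepsilon$. *)

(* Defs.v *)
From HB Require Import structures.
From mathcomp Require Import all_boot all_order all_algebra.
From mathcomp Require Import all_classical all_reals all_analysis.
Set Implicit Arguments. Unset Strict Implicit. Unset Printing Implicit Defensive.
Import Order.TTheory GRing.Theory Num.Theory.
Import numFieldNormedType.Exports.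
Local Open Scope classical_set_scope.
Local Open Scope ring_scope.

(* Metric spaces with a distinguished point (needed so that the Borel
   sigma-algebra of X * Y can be packaged as a measurableType; harmless since
   a probability measure on X * Y forces X and Y to be nonempty). *)
#[short(type="pointedMetricType")]
HB.structure Definition PointedMetric (K : numDomainType) :=
  { M of Pointed M & Metric K M }.

Definition borel (T : ptopologicalType) := g_sigma_algebraType (@open T).

Definition borel_prod {R : realType} (X Y : pointedMetricType R) :=
  g_sigma_algebraType (@open (X * Y)%type).

Definition complete_metric {R : realType} (X : metricType R) : Prop :=
  forall u : nat -> X,
    (forall e : R, 0 < e -> exists N : nat, forall m n : nat,
        (N <= m)%N -> (N <= n)%N -> mdist (u m) (u n) < e) ->
    exists l : X, u @ \oo --> l.

Definition separable_space (T : topologicalType) : Prop :=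
  exists D : set T, countable D /\ dense D.

Definition inner_product_norm {R : realType} (H : normedModType R) : Prop :=
  exists ip : H -> H -> R,
    [/\ forall u v, ip u v = ip v u,
        forall a u v w, ip (a *: u + v) w = a * ip u w + ip v w,
        forall u, 0 <= ip u u,
        forall u, ip u u = 0 -> u = 0
      & forall u, `|u| = Num.sqrt (ip u u)].

Definition hilbert_separable {R : realType} (H : completeNormedModType R) : Prop :=
  inner_product_norm H /\ separable_space H.

Definition L0 {R : realType} (X : pointedMetricType R) (H : normedModType R)
  : set (X -> H) :=
  [set f | @measurable_fun _ _ (borel X) (borel H) setT f].

Definition Cont {R : realType} (X : pointedMetricType R) (H : normedModType R)
  : set (X -> H) := [set f | continuous f].

Definition d_psi {R : realType} (X Y : pointedMetricType R)
  (H : normedModType R) (P : probability (borel_prod X Y) R)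
  (psi : R -> R) (f1 f2 : X -> H) : \bar R :=
  (\int[P]_(z in setT) (psi `|f1 z.1 - f2 z.1|)%:E)%E.

Definition dense_wrt {R : realType} (X Y : pointedMetricType R)
  (H : normedModType R) (P : probability (borel_prod X Y) R)
  (psi : R -> R) (S T : set (X -> H)) : Prop :=
  forall t, T t -> forall eps : R, 0 < eps ->
    exists2 s, S s & (d_psi P psi t s < eps%:E)%E.

Arguments L0 {R} X H.
Arguments Cont {R} X H.

(* Main.v *)
Require Import Defs.
From HB Require Import structures.
From mathcomp Require Import all_boot all_order all_algebra.
From mathcomp Require Import all_classical all_reals all_analysis.
From mathcomp Require Import measurable_realfun.
From mathcomp Require Import lra.
Import Order.TTheory GRing.Theory Num.Theory.
Import numFieldNormedType.Exports.
Local Open Scope classical_set_scope.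
Local Open Scope ring_scope.

Lemma exists_natinv (R : realType) (r : R) : 0 < r -> exists n : nat, n.+1%:R^-1 < r.
Proof.
move=> r0; have [N _ hN] := near_infty_natSinv_lt (PosNum r0).
by exists N; apply: hN => /=.
Qed.

Lemma dense_seq (R : realType) (H : normedModType R) :
  separable_space H -> exists e : nat -> H,
    forall u (r : R), 0 < r -> exists k, `|u - e k| < r.
Proof.
move=> [D [cD dD]].
have [g hg] := pcard_surjP cD.
exists g => u r r0.
have [d [/= bd Dd]] := dD (ball u r) (ex_intro _ u (ballxx u r0)) (ball_open u r).
have [k _ gk] := hg d Dd.
by exists k; rewrite gk; move: bd; rewrite -ball_normE.
Qed.

Lemma measurable_ball_borel (R : realType) (H : normedModType R) (u : H) (r : R) :
  @measurable _ (borel H) (ball u r).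
Proof. by apply: sub_sigma_algebra; exact: ball_open. Qed.

Lemma pair_meas (R : realType) (X : pointedMetricType R) (H : normedModType R)
  (T : ptopologicalType) (phi : H * H -> T) (f g : X -> H) :
  separable_space H ->
  L0 X H f -> L0 X H g -> continuous phi ->
  @measurable_fun _ _ (borel X) (borel T) setT (fun x => phi (f x, g x)).
Proof.
move=> sH mf mg cphi.
have {}mf : @measurable_fun _ _ (borel X) (borel H) setT f := mf.
have {}mg : @measurable_fun _ _ (borel X) (borel H) setT g := mg.
have [e he] := @dense_seq R H sH.
apply: (@measurability _ _ (borel X) (borel T) setT _ (@open T)) => //.
move=> _ [V oV <-].
have oW : open (phi @^-1` V) by move/continuousP : cphi; apply.
set W := phi @^-1` V.
pose q (n : nat) : R := n.+1%:R^-1.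
pose S k1 k2 n := [set x : X | (forall u v, `|e k1 - u| < q n -> `|e k2 - v| < q n -> W (u, v))
   /\ `|e k1 - f x| < q n /\ `|e k2 - g x| < q n].
have -> : setT `&` (fun x => phi (f x, g x)) @^-1` V =
   \bigcup_k1 \bigcup_k2 \bigcup_n S k1 k2 n.
  apply/seteqP; split => x /=.
    move=> [_ Vx].
    have : nbhs (f x, g x) W by apply: open_nbhs_nbhs; split.
    move/nbhs_ballP => [r r0 brW].
    have [n hn] := @exists_natinv R _ (divr_gt0 r0 (ltr0n R 2)).
    have qn0 : 0 < q n by rewrite /q invr_gt0 ltr0n.
    have [k1 hk1] := he (f x) _ qn0.
    have [k2 hk2] := he (g x) _ qn0.
    exists k1 => //; exists k2 => //; exists n => //; split; last first.
      by rewrite distrC hk1 distrC hk2.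
    move=> u v hu hv; apply: brW; split => /=; rewrite -ball_normE /=.
      rewrite (le_lt_trans (ler_distD (e k1) _ _))//.
      by rewrite (splitr r) ltrD// (lt_trans _ hn).
    rewrite (le_lt_trans (ler_distD (e k2) _ _))//.
    by rewrite (splitr r) ltrD// (lt_trans _ hn).
  move=> [k1 _ [k2 _ [n _ [hW [h1 h2]]]]]; split => //.
  exact: hW.
apply: bigcupT_measurable => k1; apply: bigcupT_measurable => k2.
apply: bigcupT_measurable => n.
have [c|nc] := pselect (forall u v, `|e k1 - u| < q n -> `|e k2 - v| < q n -> W (u, v)).
  have -> : S k1 k2 n = (setT `&` f @^-1` ball (e k1) (q n)) `&` (setT `&` g @^-1` ball (e k2) (q n)).
    apply/seteqP; split => x /=; rewrite -!ball_normE /=.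
      by move=> [_ [h1 h2]].
    by move=> [[_ h1] [_ h2]].
  apply: measurableI.
    exact: (mf measurableT _ (measurable_ball_borel _ _ (e k1) (q n))).
  exact: (mg measurableT _ (measurable_ball_borel _ _ (e k2) (q n))).
suff -> : S k1 k2 n = set0 by exact: measurable0.
by apply/seteqP; split => x //= [].
Qed.

Lemma cont_borel_meas (T1 T2 : ptopologicalType) (h : T1 -> T2) :
  continuous h -> @measurable_fun _ _ (borel T1) (borel T2) setT h.
Proof.
move=> ch; apply: (@measurability _ _ (borel T1) (borel T2) setT _ (@open T2)) => //.
move=> _ [V oV <-]; rewrite setTI; apply: sub_sigma_algebra.
by move/continuousP : ch; apply.
Qed.

Lemma borel_to_R (R : realType) (T1 : ptopologicalType) (h : T1 -> R) :
  @measurable_fun _ _ (borel T1) (borel R) setT h ->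
  @measurable_fun _ _ (borel T1) R setT h.
Proof.
move=> mh.
apply: (@measurability _ _ (borel T1) R setT h _ (RGenOInfty.measurableE R)).
move=> _ [_ [x ->] <-].
apply: (mh measurableT); apply: sub_sigma_algebra; exact: rray_open.
Qed.

Section L0lemmas.
Variables (R : realType) (X : pointedMetricType R) (H : normedModType R).
Hypothesis sH : separable_space H.

Lemma L0D (f g : X -> H) : L0 X H f -> L0 X H g -> L0 X H (fun x => f x + g x).
Proof.
move=> mf mg; exact: (@pair_meas R X H H (fun p => p.1 + p.2) f g sH mf mg add_continuous).
Qed.

Lemma L0B (f g : X -> H) : L0 X H f -> L0 X H g -> L0 X H (fun x => f x - g x).
Proof.
move=> mf mg; have := (@pair_meas R X H H (fun p => p.1 - p.2) f g sH mf mg).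
by apply => p; apply: continuousB; [exact: cvg_fst | exact: cvg_snd].
Qed.

Lemma normB_meas (f g : X -> H) : L0 X H f -> L0 X H g ->
  @measurable_fun _ _ (borel X) R setT (fun x => `|f x - g x|).
Proof.
move=> mf mg; apply: borel_to_R.
apply: (@pair_meas R X H R (fun p => `|p.1 - p.2|) f g sH mf mg).
move=> p; apply: (@continuous_comp _ _ _ (fun p : H * H => p.1 - p.2) (@Num.Def.normr _ H)).
  by apply: continuousB; [exact: cvg_fst | exact: cvg_snd].
exact: norm_continuous.
Qed.

Lemma cont_L0 (f : X -> H) : Cont X H f -> L0 X H f.
Proof. by move=> cf; exact: cont_borel_meas. Qed.

End L0lemmas.

Section Lim.
Variables (R : realType) (X Y : pointedMetricType R) (H : normedModType R).
Variables (P : probability (borel_prod X Y) R) (psi : R -> R).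
Hypothesis sH : separable_space H.
Hypothesis psi_cont : {within `[0, +oo[, continuous psi}.
Hypothesis psi01 : forall x, 0 <= x -> 0 <= psi x <= 1.
Hypothesis psi0 : psi 0 = 0.

Lemma psi_small e : 0 < e -> exists2 d, 0 < d & forall x, 0 <= x -> x < d -> psi x < e.
Proof.
move=> e0.
have A0 : `[0, +oo[%classic (0 : R) by rewrite /= in_itv /= lexx.
have := (subspace_continuousP _ _).1 psi_cont 0 A0.
move=> /cvgrPdist_lt /(_ e e0) /nbhs_ballP [d d0 hd]; exists d => // x x0 xd.
have bx : ball (0 : R) d x by rewrite -ball_normE /= distrC subr0 ger0_norm.
have := hd x bx; rewrite /= in_itv /= x0 => /(_ isT).
rewrite /from_subspace psi0 distrC subr0 => /(le_lt_trans (ler_norm _)).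
done.
Qed.

End Lim.

Section DistSet.
Variables (R : realType) (X : metricType R) (U : set X).
Hypothesis Uc : exists y, ~ U y.

Definition dU (x : X) : R := inf [set mdist x y | y in ~` U].

Lemma dU_ne x : [set mdist x y | y in ~` U] !=set0.
Proof. by have [y ny] := Uc; exists (mdist x y); exists y. Qed.

Lemma dU_hlb x : has_lbound [set mdist x y | y in ~` U].
Proof. by exists 0 => _ [y _ <-]; exact: mdist_ge0. Qed.

Lemma dU_ge0 x : 0 <= dU x.
Proof. by apply: lb_le_inf; [exact: dU_ne | move=> _ [y _ <-]; exact: mdist_ge0]. Qed.

Lemma dU_le x y : ~ U y -> dU x <= mdist x y.
Proof. by move=> ny; apply: ge_inf; [exact: dU_hlb | exists y]. Qed.

Lemma dU_lip x x' : dU x <= mdist x x' + dU x'.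
Proof.
rewrite -lerBlDl; apply: lb_le_inf; first exact: dU_ne.
move=> _ [y ny <-]; rewrite lerBlDl.
have h := dU_le x y ny. have h2 := metric_triangle x x' y. exact: le_trans h h2.
Qed.

Lemma dU_cont : continuous dU.
Proof.
move=> x; apply/cvgrPdist_lt => e e0.
apply/nbhs_ballP; exists e => // x'; rewrite ballEmdist /= => hx.
have h1 := dU_lip x x'; have h2 := dU_lip x' x.
rewrite metric_sym in h2.
rewrite (le_lt_trans _ hx)// ler_norml; apply/andP; split; lra.
Qed.

Lemma dU_pos x : open U -> U x -> 0 < dU x.
Proof.
move=> oU Ux.
have : nbhs x U by apply: open_nbhs_nbhs; split.
move/nbhs_ballP => [r /= r0 hr].
apply: (lt_le_trans r0); apply: lb_le_inf; first exact: dU_ne.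
move=> _ [y ny <-]; rewrite leNgt; apply/negP => hy.
by apply: ny; apply: hr; rewrite ballEmdist.
Qed.

Lemma dU_out x : ~ U x -> dU x = 0.
Proof.
move=> nx; apply/eqP; rewrite eq_le dU_ge0 andbT.
by rewrite -(mdistxx x); exact: dU_le.
Qed.

End DistSet.

Section Main.
Variables (R : realType) (X Y : pointedMetricType R) (H : normedModType R).
Variables (P : probability (borel_prod X Y) R) (psi : R -> R).
Hypothesis sH : separable_space H.
Hypothesis psi_cont : {within `[0, +oo[, continuous psi}.
Hypothesis psi01 : forall x, 0 <= x -> 0 <= psi x <= 1.
Hypothesis psi_sub : forall x y, 0 <= x -> 0 <= y -> psi (x + y) <= psi x + psi y.
Hypothesis psi_mono : forall x y, 0 <= x -> x <= y -> psi x <= psi y.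
Hypothesis psi0 : psi 0 = 0.

Local Notation dist := (@d_psi R X Y H P psi).

Lemma fst_meas : @measurable_fun _ _ (borel_prod X Y) (borel X) setT fst.
Proof.
apply: (@measurability _ _ (borel_prod X Y) (borel X) setT fst (@open X)) => //.
move=> _ [V oV <-]; rewrite setTI; apply: sub_sigma_algebra.
have cf : continuous (fst : (X * Y)%type -> X) by move=> p; exact: cvg_fst.
by move/continuousP : cf; apply.
Qed.

Lemma integrand_meas (f g : X -> H) : L0 X H f -> L0 X H g ->
  @measurable_fun _ _ (borel_prod X Y) (\bar R) setT
    (fun z => (psi `|f z.1 - g z.1|)%:E).
Proof.
move=> mf mg.
apply/(measurable_EFinP setT (fun z : borel_prod X Y => psi `|f z.1 - g z.1|)).
have m1 : @measurable_fun _ _ (borel_prod X Y) R setT (fun z => `|f z.1 - g z.1|).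
  exact: (measurableT_comp (@normB_meas R X H sH f g mf mg) fst_meas).
have h := @measurable_comp _ _ _ (borel_prod X Y) R R (`[0, +oo[%classic : set R) psi setT
   (fun z : borel_prod X Y => `|f z.1 - g z.1|) (measurable_itv _).
apply: h => //.
- by move=> _ [z _ <-] /=; rewrite in_itv /= andbT.
- exact: subspace_continuous_measurable_fun (measurable_itv _) psi_cont.
Qed.

Lemma integrand_ge0 (f g : X -> H) (z : (X * Y)%type) : (0 <= (psi `|f z.1 - g z.1|)%:E)%E.
Proof. by rewrite lee_fin; case/andP: (psi01 _ (normr_ge0 (f z.1 - g z.1))). Qed.

Lemma le_dist (a b p q r s : X -> H) :
  L0 X H a -> L0 X H b -> L0 X H p -> L0 X H q -> L0 X H r -> L0 X H s ->
  (forall x, `|a x - b x| <= `|p x - q x| + `|r x - s x|) ->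
  (dist a b <= dist p q + dist r s)%E.
Proof.
move=> ma mb mp mq mr ms hle; rewrite /d_psi.
rewrite -ge0_integralD //; first last.
- exact: integrand_meas.
- by move=> z _; exact: integrand_ge0.
- exact: integrand_meas.
- by move=> z _; exact: integrand_ge0.
apply: ge0_le_integral => //.
- by move=> z _; exact: integrand_ge0.
- exact: integrand_meas.
- by apply: emeasurable_funD; exact: integrand_meas.
move=> z _; rewrite -EFinD lee_fin.
apply: le_trans (psi_sub _ _ (normr_ge0 _) (normr_ge0 _)).
by apply: psi_mono => //; exact: hle.
Qed.

Lemma dist_lim (h : nat -> X -> H) (f : X -> H) : (forall n, L0 X H (h n)) -> L0 X H f ->
  (forall x, h n x @[n --> \oo] --> f x) ->
  forall e, 0 < e -> exists n, (dist f (h n) < e%:E)%E.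
Proof.
move=> mh mf hf e e0.
pose fn n (z : borel_prod X Y) := (psi `|f z.1 - h n z.1|)%:E.
have ff : {ae P, forall z, [set: borel_prod X Y] z -> fn ^~ z @ \oo --> (cst 0%E : _ -> \bar R) z}.
  apply: aeW => z _.
  apply: cvg_EFin; first exact: nearW.
  apply/(@cvgrPdist_lt _ R^o _ \oo _ _ 0) => eps eps0.
  have [d d0 hd] := @psi_small R psi psi_cont psi0 eps eps0.
  move: (hf z.1) => /cvgrPdist_lt /(_ d d0) H1.
  apply: (filterS _ H1) => n hn /=.
  rewrite sub0r normrN ger0_norm; last by case/andP: (psi01 _ (normr_ge0 (f z.1 - h n z.1))).
  exact: hd.
have ig : P.-integrable [set: borel_prod X Y] (EFin \o cst (1%R : R)).
  exact: finite_measure_integrable_cst.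
have fg : {ae P, forall z n, [set: borel_prod X Y] z -> (`|fn n z| <= (EFin \o cst (1%R : R)) z)%E}.
  apply: aeW => z n _ /=.
  case/andP: (psi01 _ (normr_ge0 (f z.1 - h n z.1))) => p0 p1.
  by rewrite /fn /= lee_fin ger0_norm.
have [_ _ h3] := @dominated_convergence _ (borel_prod X Y) R P setT measurableT fn
  (cst 0%E) (EFin \o cst (1%R : R)) (fun n => @integrand_meas f (h n) mf (mh n)) (measurable_cst _) ff ig fg.
move: h3; rewrite integral0 => /fine_cvgP [fin].
move=> /cvgrPdist_lt /(_ e e0) hc.
have [N _ hN] := filterI fin hc.
exists N; have [f1 h1] := hN N (leqnn N).
move: f1 h1 => /= f1 h1.
have -> : dist f (h N) = (\int[P]_x fn N x)%E by [].
rewrite -(fineK f1) lte_fin.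
move: h1; rewrite /= sub0r normrN => /(le_lt_trans (ler_norm _)).
done.
Qed.


Definition approx (f : X -> H) := forall e : R, 0 < e -> exists2 c, Cont X H c & (dist f c < e%:E)%E.

Lemma dist_self (c : X -> H) : dist c c = 0%E.
Proof. by apply: integral0_eq => z _; rewrite subrr normr0 psi0. Qed.

Lemma approx_cont c : Cont X H c -> approx c.
Proof. by move=> cc e e0; exists c => //; rewrite dist_self lte_fin. Qed.

Lemma approx_lim (h : nat -> X -> H) f : (forall n, L0 X H (h n)) -> (forall n, approx (h n)) ->
  L0 X H f -> (forall x, h n x @[n --> \oo] --> f x) -> approx f.
Proof.
move=> mh ah mf hf e e0.
have e20 : 0 < e / 2 by rewrite divr_gt0.
have [n hn] := dist_lim _ _ mh mf hf _ e20.
have [c cc hc] := ah n _ e20.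
exists c => //.
have mc := @cont_L0 R X H c cc.
apply: (le_lt_trans (le_dist _ _ _ _ _ _ mf mc mf (mh n) (mh n) mc _)).
  by move=> x; exact: ler_distD.
by rewrite (splitr e) EFinD; exact: lteD.
Qed.

Lemma approxD f g : L0 X H f -> L0 X H g -> approx f -> approx g -> approx (fun x => f x + g x).
Proof.
move=> mf mg af ag e e0.
have e20 : 0 < e / 2 by rewrite divr_gt0.
have [c cc hc] := af _ e20; have [d cd hd] := ag _ e20.
have mc := @cont_L0 R X H c cc; have md := @cont_L0 R X H d cd.
exists (fun x => c x + d x).
  by move=> x; apply: continuousD; [exact: cc | exact: cd].
apply: (le_lt_trans (le_dist _ _ _ _ _ _ (@L0D R X H sH _ _ mf mg) (@L0D R X H sH _ _ mc md) mf mc mg md _)).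
  by move=> x; rewrite opprD addrACA; exact: ler_normD.
by rewrite (splitr e) EFinD; exact: lteD.
Qed.

Lemma approxB f g : L0 X H f -> L0 X H g -> approx f -> approx g -> approx (fun x => f x - g x).
Proof.
move=> mf mg af ag e e0.
have e20 : 0 < e / 2 by rewrite divr_gt0.
have [c cc hc] := af _ e20; have [d cd hd] := ag _ e20.
have mc := @cont_L0 R X H c cc; have md := @cont_L0 R X H d cd.
exists (fun x => c x - d x).
  by move=> x; apply: continuousB; [exact: cc | exact: cd].
apply: (le_lt_trans (le_dist _ _ _ _ _ _ (@L0B R X H sH _ _ mf mg) (@L0B R X H sH _ _ mc md) mf mc mg md _)).
  move=> x; rewrite (_ : f x - g x - (c x - d x) = (f x - c x) - (g x - d x)).
    exact: ler_normB.
  by rewrite !opprB addrACA [in RHS]addrACA [- c x + _]addrC.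
by rewrite (splitr e) EFinD; exact: lteD.
Qed.

Definition ind (A : set X) (v : H) (x : X) : H := if x \in A then v else 0.

Lemma meas_cst (p : Prop) : @measurable _ (borel X) [set _ : X | p].
Proof.
have [hp|hp] := pselect p.
  by rewrite (_ : [set _ | p] = setT); [exact: measurableT | apply/seteqP; split].
by rewrite (_ : [set _ | p] = set0); [exact: measurable0 | apply/seteqP; split].
Qed.

Lemma L0_ind A v : @measurable _ (borel X) A -> L0 X H (ind A v).
Proof.
move=> mA _ B mB; rewrite setTI.
rewrite (_ : _ @^-1` _ = (A `&` [set _ | B v]) `|` (~` A `&` [set _ | B 0])).
  by apply: measurableU; apply: measurableI => //; [exact: meas_cst | exact: measurableC | exact: meas_cst].
apply/seteqP; split => x; rewrite /ind /=; have [xA|xA] := pselect (A x).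
- by rewrite mem_set // => Bv; left.
- by rewrite memNset // => B0; right.
- by rewrite mem_set // => -[[]//|[]//].
- by rewrite memNset // => -[[]//|[]//].
Qed.

Lemma approx_open (U : set X) v : open U -> approx (ind U v).
Proof.
move=> oU.
have mU : @measurable _ (borel X) U by exact: sub_sigma_algebra.
have [Uc|nUc] := pselect (exists y, ~ U y); last first.
  have -> : ind U v = cst v.
    apply/funext => x; rewrite /ind mem_set//; apply: contrapT => nx; apply: nUc; by exists x.
  by apply: (approx_cont (cst v)) => x; exact: cvg_cst.
pose g (n : nat) (x : X) := (Num.min 1 (n%:R * @dU R X U x)) *: v.
have cg n : Cont X H (g n).
  move=> x; rewrite /g; apply: (@continuousZr_tmp R H X (fun x => Num.min 1 (n%:R * @dU R X U x)) v x).
  apply: (@continuous_min R X (cst 1) (fun x => n%:R * @dU R X U x) x); first exact: cvg_cst.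
  apply: (@continuousM R X (cst n%:R) (@dU R X U) x); first exact: cvg_cst.
  exact: (@dU_cont R X U Uc).
apply: (approx_lim g (ind U v)).
- by move=> n; exact: cont_L0.
- by move=> n; exact: approx_cont.
- exact: L0_ind.
move=> x; have [Ux|Ux] := pselect (U x); last first.
  rewrite (_ : (fun n => g n x) = cst 0); first by rewrite /ind memNset //; exact: cvg_cst.
  by apply/funext => n; rewrite /g (@dU_out R X U Uc x Ux) mulr0 (_ : Num.min 1 0 = 0) ?scale0r // /Num.min ltr10.
have d0 := @dU_pos R X U Uc x oU Ux.
have [N hN] := @exists_natinv R _ d0.
apply/cvgrPdist_lt => eps eps0.
exists N.+1 => // n /= hn.
rewrite /g /ind mem_set //.
rewrite (_ : Num.min 1 (n%:R * @dU R X U x) = 1) ?scale1r ?subrr ?normr0 //.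
apply/min_idPl.
have N0 : (0 : R) < N.+1%:R by rewrite ltr0n.
have h1 : 1 < N.+1%:R * dU R X U x.
  by rewrite -[X in X < _](mulfV (lt0r_neq0 N0)) ltr_pM2l.
have h2 : N.+1%:R <= n%:R :> R by rewrite ler_nat.
apply: ltW; apply: (lt_le_trans h1); rewrite ler_wpM2r //; exact: ltW.
Qed.

Lemma ind_union (A B : set X) v : A `&` B = set0 ->
  ind (A `|` B) v = (fun x => ind A v x + ind B v x).
Proof.
move=> AB; apply/funext => x; rewrite /ind.
have [xA|xA] := pselect (A x); have [xB|xB] := pselect (B x).
- by have : (A `&` B) x by []; rewrite AB.
- by rewrite (mem_set xA) (memNset xB) (@mem_set _ (A `|` B) x) ?addr0 //; left.
- by rewrite (memNset xA) (mem_set xB) (@mem_set _ (A `|` B) x) ?add0r //; right.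
- by rewrite (memNset xA) (memNset xB) memNset ?addr0 // => -[].
Qed.

Lemma approx_meas A : @measurable _ (borel X) A -> forall v, approx (ind A v).
Proof.
move=> mA.
apply: (@dynkin_induction _ (borel X) (@open X) [set A | forall v, approx (ind A v)]) => //.
- by move=> U V; exact: openI.
- by move=> v; apply: approx_open; exact: openT.
- by move=> U oU v; exact: approx_open.
- move=> S mS PS v.
  have -> : ind (~` S) v = (fun x => cst v x - ind S v x).
    apply/funext => x; rewrite /ind /=; have [xS|xS] := pselect (S x).
      by rewrite (mem_set xS) memNset ?subrr // => /(_ xS).
    by rewrite (memNset xS) mem_set ?subr0.
  apply: approxB.
  + by apply: cont_L0 => x; exact: cvg_cst.
  + exact: L0_ind.
  + by apply: approx_cont => x; exact: cvg_cst.
  + exact: PS.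
- move=> F mF tF PF v.
  pose B n := [set x | exists2 k, (k < n)%N & F k x].
  have B0 : B 0%N = set0 by apply/seteqP; split => x // [].
  have BS n : B n.+1 = B n `|` F n.
    apply/seteqP; split => x /=.
      move=> [k]; rewrite ltnS leq_eqVlt => /orP [/eqP -> | kn] Fk; first by right.
      by left; exists k.
    by move=> [[k kn Fk]|Fn]; [exists k => //; exact: ltnW | exists n].
  have BF n : B n `&` F n = set0.
    apply/seteqP; split => x // [[k kn Fk] Fn].
    have kn' := tF k n I I (ex_intro _ x (conj Fk Fn)).
    by move: kn; rewrite kn' ltnn.
  have hB n : @measurable _ (borel X) (B n) /\ approx (ind (B n) v).
    elim: n => [|n [mBn aBn]].
      rewrite B0; split; first exact: measurable0.
      rewrite (_ : ind set0 v = cst 0); first by apply: approx_cont => x; exact: cvg_cst.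
      by apply/funext => x; rewrite /ind memNset.
    rewrite BS; split; first exact: measurableU.
    rewrite ind_union //.
    apply: approxD => //; [exact: L0_ind | exact: L0_ind | exact: PF].
  apply: (approx_lim (fun n => ind (B n) v)).
  + by move=> n; apply: L0_ind; exact: (hB n).1.
  + by move=> n; exact: (hB n).2.
  + by apply: L0_ind; exact: bigcupT_measurable.
  move=> x; have [[k _ Fk]|nx] := pselect ((\bigcup_k F k) x); last first.
    rewrite (_ : (fun n => ind (B n) v x) = cst 0); first by rewrite /ind memNset //; exact: cvg_cst.
    apply/funext => n; rewrite /ind memNset // => -[j _ Fj]; apply: nx; by exists j.
  apply/cvgrPdist_lt => eps eps0.
  exists k.+1 => // n /= hn.
  rewrite /ind (@mem_set _ (\bigcup_k F k) x); last by exists k.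
  by rewrite mem_set ?subrr ?normr0 //; exists k.
Qed.

Lemma approx_L0 f : L0 X H f -> approx f.
Proof.
move=> mf.
have mf' : @measurable_fun _ _ (borel X) (borel H) setT f := mf.
have [e he] := @dense_seq R H sH.
pose r (n : nat) : R := n.+1%:R^-1.
have r0 n : 0 < r n by rewrite /r invr_gt0 ltr0n.
have exP n x : exists k, `|e k - f x| < r n.
  by have [k hk] := he (f x) _ (r0 n); exists k; rewrite distrC.
pose km n x := ex_minn (exP n x).
have kmP n x k : (km n x = k) <-> (`|e k - f x| < r n /\ forall j, (j < k)%N -> ~ (`|e j - f x| < r n)).
  rewrite /km; case: ex_minnP => m Pm minm; split.
    move=> <-; split => // j jm Pj; have := minm j Pj; rewrite leqNgt jm //.
  move=> [Pk nj]; apply/eqP; rewrite eqn_leq minm //= leqNgt; apply/negP => km'.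
  exact: (nj m km' Pm).
pose S n k := [set x : X | `|e k - f x| < r n].
have mS n k : @measurable _ (borel X) (S n k).
  have := mf' measurableT _ (measurable_ball_borel _ _ (e k) (r n)).
  by rewrite setTI (_ : _ @^-1` _ = S n k) //; apply/seteqP; split => x; rewrite /S /= -ball_normE.
pose K n k := [set x : X | km n x = k].
have mK n k : @measurable _ (borel X) (K n k).
  rewrite (_ : K n k = S n k `\` \bigcup_(j in [set j | (j < k)%N]) S n j).
    by apply: measurableD => //; apply: bigcup_measurable => j _; exact: mS.
  apply/seteqP; split => x /=.
    by move/kmP => [Pk nj]; split => // -[j /= jk Pj]; exact: (nj j jk).
  by move=> [Pk nj]; apply/kmP; split => // j jk Pj; apply: nj; exists j.
pose fn n x := e (km n x).
have mfn n : L0 X H (fn n).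
  move=> _ B mB; rewrite setTI.
  rewrite (_ : _ @^-1` _ = \bigcup_k (K n k `&` [set _ | B (e k)])).
    by apply: bigcupT_measurable => k; apply: measurableI => //; exact: meas_cst.
  apply/seteqP; split => x /=.
    by move=> Bx; exists (km n x) => //.
  by move=> [k _ [/= <- Bk]].
have afn n : approx (fn n).
  pose gN N x := if (km n x < N)%N then e (km n x) else 0.
  have hg N : L0 X H (gN N) /\ approx (gN N).
    elim: N => [|N [mg ag]].
      rewrite (_ : gN 0%N = cst 0); last by apply/funext => x; rewrite /gN ltn0.
      split; first by apply: cont_L0 => x; exact: cvg_cst.
      by apply: approx_cont => x; exact: cvg_cst.
    have -> : gN N.+1 = (fun x => gN N x + ind (K n N) (e N) x).
      apply/funext => x; rewrite /gN /ind ltnS leq_eqVlt.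
      have [kN|kN] := eqVneq (km n x) N.
        by rewrite kN /= ltnn add0r mem_set.
      rewrite /= memNset ?addr0 //; exact/eqP.
    split; first by apply: L0D => //; exact: L0_ind.
    by apply: approxD => //; [exact: L0_ind | exact: approx_meas].
  apply: (approx_lim gN (fn n)).
  + by move=> N; exact: (hg N).1.
  + by move=> N; exact: (hg N).2.
  + exact: mfn.
  move=> x; apply/cvgrPdist_lt => eps eps0.
  exists (km n x).+1 => // N /= hN.
  by rewrite /gN /fn hN subrr normr0.
apply: (approx_lim fn f) => //.
move=> x; apply/cvgrPdist_lt => eps eps0.
have [N hN] := @exists_natinv R _ eps0.
exists N => // n /= hn.
have := (kmP n x (km n x)).1 erefl => -[h _].
rewrite /fn distrC (lt_le_trans h) // /r (le_trans _ (ltW hN)) //.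
by rewrite lef_pV2 ?posrE ?ltr0n // ler_nat.
Qed.

Lemma final (F : set (X -> H)) : F `<=` L0 X H ->
  ((F `<=` Cont X H /\ dense_wrt P psi F (Cont X H)) \/
   (exists2 S, S `<=` F & S `<=` Cont X H /\ dense_wrt P psi S (Cont X H))) ->
  forall eps : R, 0 < eps -> forall f, L0 X H f ->
    exists2 g, F g & (dist f g < eps%:E)%E.
Proof.
move=> FL0 hF eps eps0 f mf.
have [S SF dS] : exists2 S, S `<=` F & dense_wrt P psi S (Cont X H).
  case: hF => [[_ dF]|[S SF [_ dS]]]; first by exists F.
  by exists S.
have e20 : 0 < eps / 2 by rewrite divr_gt0.
have [c cc hc] := approx_L0 f mf _ e20.
have [s Ss hs] := dS c cc _ e20.
exists s; first exact: SF.
have mc := @cont_L0 R X H c cc.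
have ms := FL0 _ (SF _ Ss).
apply: (le_lt_trans (le_dist _ _ _ _ _ _ mf ms mf mc mc ms _)).
  by move=> x; exact: ler_distD.
by rewrite (splitr eps) EFinD; exact: lteD.
Qed.

End Main.

Theorem theorem7 (R : realType) (X Y : pointedMetricType R)
  (H : completeNormedModType R)
  (P : probability (borel_prod X Y) R) (psi : R -> R)
  (F : set (X -> H)) :
  complete_metric X -> separable_space X ->
  complete_metric Y -> separable_space Y ->
  hilbert_separable H ->
  {within `[0, +oo[, continuous psi} ->
  (forall x, 0 <= x -> 0 <= psi x <= 1) ->
  (forall x y, 0 <= x -> 0 <= y -> psi (x + y) <= psi x + psi y) ->
  (forall x y, 0 <= x -> x <= y -> psi x <= psi y) ->
  psi 0 = 0 ->
  (forall x, 0 < x -> 0 < psi x) ->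
  F `<=` L0 X H ->
  ((F `<=` Cont X H /\ dense_wrt P psi F (Cont X H)) \/
   (exists2 S, S `<=` F & S `<=` Cont X H /\ dense_wrt P psi S (Cont X H))) ->
  forall eps : R, 0 < eps -> forall f, L0 X H f ->
    exists2 g, F g & (d_psi P psi f g < eps%:E)%E.
Proof.
move=> _ _ _ _ [_ sH] pc p01 psub pmono p0 _.
exact: (@final R X Y H P psi sH pc p01 psub pmono p0 F).
Qed.
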